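(* Let $R$ be a commutative ring, $n\ge1$, and $f\in(T_n(R))[x]$. Then $f(C)=0$ for all $C\in T_n(R)$ if and only if $f_{ij}\in N_R(T_{n-j+1}(R))$ for all $1\le i\le j\le n$. Also, $f(C)_\ell=0$ for all $C\in T_n(R)$ if and only if $f_{ij}\in N_R(T_i(R))$ for all $1\le i\le j\le n$. Equivalently, under the identification of $(T_n(R))[x]$ with $T_n(R[x])$ via $f\mapsto(f_{ij})$, the set $N_{T_n(R)}(T_n(R))$ of right null-polynomials is the set of upper triangular matrices whose $(i,j)$-entry ($i\le j$) lies in $N_R(T_{n-j+1}(R))$, and the set $N^{\ell}_{T_n(R)}(T_n(R))$ of left null-polynomials is the set of upper triangular matrices whose $(i,j)$-entry ($i\le j$) lies in $N_R(T_i(R))$.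
   Context: $T_n(A)$ denotes the ring of upper triangular $n\times n$ matrices over a ring $A$. For $f=\sum_k F_kx^k\in(T_n(R))[x]$ with $F_k\in T_n(R)$, right substitution is $f(C)=\sum_kF_kC^k$ and left substitution is $f(C)_\ell=\sum_kC^kF_k$. Writing $f_{ij}^{(k)}$ for the $(i,j)$-entry of $F_k$, set $f_{ij}=\sum_k f_{ij}^{(k)}x^k\in R[x]$; the map $f\mapsto(f_{ij})$ is a ring isomorphism $(T_n(R))[x]\to T_n(R[x])$. For $m\ge1$, $N_R(T_m(R))=\{g\in R[x]\mid \forall C\in T_m(R):\ g(C)=0\}$ (usual evaluation). $N_{T_n(R)}(T_n(R))=\{f\in(T_n(R))[x]\mid\forall C\in T_n(R):\ f(C)=0\}$ and $N^{\ell}_{T_n(R)}(T_n(R))=\{f\in(T_n(R))[x]\mid\forall C\in T_n(R):\ f(C)_\ell=0\}$. *)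

(* Defs.v *)
From HB Require Import structures.
From mathcomp Require Import all_boot all_order all_algebra.
Set Implicit Arguments. Unset Strict Implicit. Unset Printing Implicit Defensive.
Import GRing.Theory.
Local Open Scope ring_scope.

Definition upper_tri (R : nzRingType) (m : nat) (A : 'M[R]_m) : Prop :=
  forall i j : 'I_m, (j < i)%N -> A i j = 0.

Definition rsubst (R : nzRingType) (n : nat) (f : {poly 'M[R]_n.+1}) (C : 'M[R]_n.+1)
  : 'M[R]_n.+1 := \sum_(k < size f) f`_k * C ^+ k.

Definition lsubst (R : nzRingType) (n : nat) (f : {poly 'M[R]_n.+1}) (C : 'M[R]_n.+1)
  : 'M[R]_n.+1 := \sum_(k < size f) C ^+ k * f`_k.

Definition fentry (R : nzRingType) (n : nat) (f : {poly 'M[R]_n.+1}) (i j : 'I_n.+1)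
  : {poly R} := \poly_(k < size f) (f`_k i j).

(* g \in N_R(T_{m+1}(R)): g(C) = 0 (usual evaluation) for every upper triangular
   (m+1)x(m+1) matrix C over R. Indexed by m with size m.+1 (sizes are >= 1). *)
Definition nullR (R : comNzRingType) (m : nat) (g : {poly R}) : Prop :=
  forall C : 'M[R]_m.+1, upper_tri C -> horner_mx C g = 0.

(* Main.v *)
Require Import Defs.
From HB Require Import structures.
From mathcomp Require Import all_boot all_order all_algebra.
From mathcomp Require Import zify.
Import GRing.Theory.
Set Implicit Arguments. Unset Strict Implicit.
Local Open Scope ring_scope.


Lemma ut_mul (R : nzRingType) m (A B : 'M[R]_m.+1) :
  upper_tri A -> upper_tri B -> upper_tri (A * B).
Proof.
move=> hA hB i j lt_ji; rewrite -mulmxE mxE big1 // => z _.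
have [lt_zi|le_iz] := ltnP z i; first by rewrite hA // mul0r.
by rewrite hB ?mulr0 // (leq_trans lt_ji le_iz).
Qed.

Lemma ut_exp (R : nzRingType) m (A : 'M[R]_m.+1) k :
  upper_tri A -> upper_tri (A ^+ k).
Proof.
move=> hA; elim: k => [|k IH].
  move=> i j lt_ji; rewrite expr0 !mxE.
  by have -> : (i == j) = false by apply/eqP => e; rewrite e ltnn in lt_ji.
by rewrite exprS; apply: ut_mul.
Qed.

Lemma horner_poly_entry (R : comNzRingType) m (C : 'M[R]_m.+1) s (E : nat -> R) i j :
  horner_mx C (\poly_(k < s) E k) i j = \sum_(k < s) E k * (C ^+ k) i j.
Proof.
rewrite poly_def rmorph_sum summxE; apply: eq_bigr => k _.
by rewrite -mul_polyC rmorphM /= rmorphXn /= horner_mx_C horner_mx_X -mulmxE mul_scalar_mx mxE.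
Qed.

Lemma horner_entry (R : comNzRingType) m (C : 'M[R]_m.+1) (g : {poly R}) i j :
  horner_mx C g i j = \sum_(k < size g) g`_k * (C ^+ k) i j.
Proof. by rewrite -{1}[g]coefK horner_poly_entry. Qed.

Lemma ut_horner (R : comNzRingType) m (C : 'M[R]_m.+1) (g : {poly R}) :
  upper_tri C -> upper_tri (horner_mx C g).
Proof.
move=> hC i j lt_ji; rewrite horner_entry big1 // => k _.
by rewrite (ut_exp k hC) // mulr0.
Qed.

Lemma mul_entry (R : nzRingType) N (A B : 'M[R]_N.+1) x y :
  upper_tri A -> upper_tri B -> (x <= y <= N)%N ->
  (A * B) (inord x) (inord y) =
  \sum_(x <= z < y.+1) A (inord x) (inord z) * B (inord z) (inord y).
Proof.
move=> hA hB /andP[hxy hyN].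
rewrite -mulmxE mxE.
rewrite (eq_bigr (fun z : 'I_N.+1 => A (inord x) (inord (val z)) * B (inord (val z)) (inord y)));
  last by move=> z _; rewrite inord_val.
rewrite -(big_mkord xpredT (fun z => A (inord x) (inord z) * B (inord z) (inord y))).
rewrite (big_cat_nat _ (n := x)) //=; last by lia.
rewrite [X in X + _]big_nat_cond [X in X + _]big1 ?add0r; last first.
  move=> z /andP[/andP[_ hz] _]; rewrite hA ?mul0r //.
  by rewrite !inordK //; lia.
rewrite (big_cat_nat _ (n := y.+1)) //=; last by lia.
rewrite [X in _ + X]big_nat_cond [X in _ + X]big1 ?addr0 // => z /andP[/andP[hz1 hz2] _].
by rewrite hB ?mulr0 // !inordK //; lia.
Qed.

Lemma pow_window (R : nzRingType) M N (B : 'M[R]_M.+1) (A : 'M[R]_N.+1) p q c :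
  upper_tri A -> upper_tri B -> (c + p <= M)%N -> (c + q <= N)%N ->
  (forall x y, (x <= y <= c)%N ->
     B (inord (x+p)) (inord (y+p)) = A (inord (x+q)) (inord (y+q))) ->
  forall k x y, (x <= y <= c)%N ->
  (B ^+ k) (inord (x+p)) (inord (y+p)) = (A ^+ k) (inord (x+q)) (inord (y+q)).
Proof.
move=> hA hB hM hN hw; elim=> [|k IH] x y /andP[hxy hyc].
  rewrite !expr0 !mxE.
  have -> : (inord (x + p) == inord (y + p) :> 'I_M.+1) = (x == y).
    by rewrite -val_eqE /= !inordK ?eqn_add2r //; lia.
  have -> : (inord (x + q) == inord (y + q) :> 'I_N.+1) = (x == y).
    by rewrite -val_eqE /= !inordK ?eqn_add2r //; lia.
  by [].
rewrite !exprSr !mul_entry //; try exact: ut_exp; try lia.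
have e1 : (x + p = x + p)%N by [].
rewrite (big_addn x _ p) (big_addn x _ q).
have -> : ((y + p).+1 - p = y.+1)%N by lia.
have -> : ((y + q).+1 - q = y.+1)%N by lia.
apply: eq_big_nat => z hz.
rewrite IH ?hw //; lia.
Qed.

Lemma horner_window (R : comNzRingType) M N (B : 'M[R]_M.+1) (A : 'M[R]_N.+1) p q c
  (g : {poly R}) :
  upper_tri A -> upper_tri B -> (c + p <= M)%N -> (c + q <= N)%N ->
  (forall x y, (x <= y <= c)%N ->
     B (inord (x+p)) (inord (y+p)) = A (inord (x+q)) (inord (y+q))) ->
  forall x y, (x <= y <= c)%N ->
  horner_mx B g (inord (x+p)) (inord (y+p)) = horner_mx A g (inord (x+q)) (inord (y+q)).
Proof.
move=> hA hB hM hN hw x y hxy; rewrite !horner_entry; apply: eq_bigr => k _.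
by rewrite (pow_window hA hB hM hN hw).
Qed.

Lemma horner_zero_row (R : comNzRingType) m (C : 'M[R]_m.+1) (g : {poly R}) l j :
  (forall y, C l y = 0) -> l != j -> horner_mx C g l j = 0.
Proof.
move=> hr hlj; rewrite horner_entry big1 // => -[[|k] _] _ /=.
  by rewrite expr0 mxE (negbTE hlj) mulr0.
rewrite exprS -mulmxE mxE big1 ?mulr0 // => z _.
by rewrite hr mul0r.
Qed.

Lemma horner_zero_col (R : comNzRingType) m (C : 'M[R]_m.+1) (g : {poly R}) i l :
  (forall x, C x l = 0) -> i != l -> horner_mx C g i l = 0.
Proof.
move=> hr hlj; rewrite horner_entry big1 // => -[[|k] _] _ /=.
  by rewrite expr0 mxE (negbTE hlj) mulr0.
rewrite exprSr -mulmxE mxE big1 ?mulr0 // => z _.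
by rewrite hr mulr0.
Qed.

Lemma rsubst_entry (R : comNzRingType) n (f : {poly 'M[R]_n.+1}) C i m :
  rsubst f C i m = \sum_(l < n.+1) horner_mx C (fentry f i l) l m.
Proof.
rewrite /rsubst summxE.
rewrite (eq_bigr (fun k : 'I_(size f) => \sum_(l < n.+1) f`_k i l * (C ^+ k) l m)); last first.
  by move=> k _; rewrite -mulmxE mxE.
rewrite exchange_big /=; apply: eq_bigr => l _.
by rewrite /fentry horner_poly_entry.
Qed.

Lemma lsubst_entry (R : comNzRingType) n (f : {poly 'M[R]_n.+1}) C i m :
  lsubst f C i m = \sum_(l < n.+1) horner_mx C (fentry f l m) i l.
Proof.
rewrite /lsubst summxE.
rewrite (eq_bigr (fun k : 'I_(size f) => \sum_(l < n.+1) f`_k l m * (C ^+ k) i l)); last first.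
  by move=> k _; rewrite -mulmxE mxE; apply: eq_bigr => l _; rewrite mulrC.
rewrite exchange_big /=; apply: eq_bigr => l _.
by rewrite /fentry horner_poly_entry.
Qed.

Lemma fentry0 (R : nzRingType) n (f : {poly 'M[R]_n.+1}) (i l : 'I_n.+1) :
  (forall k, upper_tri f`_k) -> (l < i)%N -> fentry f i l = 0.
Proof.
move=> hf hli; apply/polyP => k; rewrite coef_poly coef0.
by case: ifP => // _; rewrite hf.
Qed.

Lemma rnull_row (R : comNzRingType) n (C : 'M[R]_n.+1) g (l m : 'I_n.+1) :
  upper_tri C -> nullR (n - l) g -> horner_mx C g l m = 0.
Proof.
move=> hC hg; have [lt_ml|le_lm] := ltnP m l; first by rewrite ut_horner.
have hl := ltn_ord l; have hm := ltn_ord m.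
pose D := \matrix_(x < (n - l).+1, y < (n - l).+1) C (inord (x + l)) (inord (y + l)).
have hD : upper_tri D.
  move=> x y lt_yx; rewrite mxE hC // !inordK; have := ltn_ord x; have := ltn_ord y; lia.
have hw : forall x y, (x <= y <= n - l)%N ->
    D (inord (x + 0)) (inord (y + 0)) = C (inord (x + l)) (inord (y + l)).
  by move=> x y hxy; rewrite mxE !addn0 !inordK //; lia.
have := horner_window g hC hD _ _ hw (x := 0) (y := m - l).
rewrite !addn0 add0n (subnK le_lm) !inord_val (hg D hD) mxE => h.
by rewrite -h //; lia.
Qed.

Lemma lnull_col (R : comNzRingType) n (C : 'M[R]_n.+1) g (i l : 'I_n.+1) :
  upper_tri C -> nullR l g -> horner_mx C g i l = 0.
Proof.
move=> hC hg; have [lt_li|le_il] := ltnP l i; first by rewrite ut_horner.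
have hl := ltn_ord l.
pose D := \matrix_(x < l.+1, y < l.+1) C (inord x) (inord y).
have hD : upper_tri D.
  move=> x y lt_yx; rewrite mxE hC // !inordK; have := ltn_ord x; have := ltn_ord y; lia.
have hw : forall x y, (x <= y <= l)%N ->
    D (inord (x + 0)) (inord (y + 0)) = C (inord (x + 0)) (inord (y + 0)).
  by move=> x y hxy; rewrite mxE !addn0 !inordK //; lia.
have := horner_window g hC hD _ _ hw (x := i) (y := l).
rewrite !addn0 !inord_val (hg D hD) mxE => h.
by rewrite -h //; lia.
Qed.

Lemma rstep (R : comNzRingType) n (f : {poly 'M[R]_n.+1}) (hf : forall k, upper_tri f`_k)
  (H : forall C : 'M[R]_n.+1, upper_tri C -> rsubst f C = 0) (i j : 'I_n.+1) :
  (forall l : 'I_n.+1, (j < l)%N -> forall i' : 'I_n.+1, (i' <= l)%N ->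
     nullR (n - l) (fentry f i' l)) ->
  (i <= j)%N -> nullR (n - j) (fentry f i j).
Proof.
move=> IH hij D hD; apply/matrixP => a b; rewrite mxE.
have [lt_ba|le_ab] := ltnP b a; first by rewrite ut_horner.
have hj := ltn_ord j; have ha := ltn_ord a; have hb := ltn_ord b.
pose C := \matrix_(x < n.+1, y < n.+1)
  if [&& (j <= x)%N, (x <= y)%N & (y <= n - a)%N]
  then D (inord (x - j + a)) (inord (y - j + a)) else 0.
have hC : upper_tri C.
  move=> x y lt_yx; rewrite /C mxE; case: ifP => // /and3P[_ hxy _]; lia.
have hw : forall x y, (x <= y <= n - j - a)%N ->
    D (inord (x + a)) (inord (y + a)) = C (inord (x + j)) (inord (y + j)).
  move=> x y hxy; rewrite /C mxE !inordK; try lia.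
  rewrite ifT; last (apply/and3P; split; lia).
  by rewrite !addnK.
have hwin := horner_window (fentry f i j) hC hD _ _ hw (x := 0) (y := b - a).
rewrite add0n (subnK le_ab) !inord_val in hwin.
rewrite hwin; try lia.
set m : 'I_n.+1 := inord (b - a + j).
have hm : (m : nat) = (b - a + j)%N by rewrite /m inordK //; lia.
have := H C hC; move/matrixP => /(_ i m); rewrite mxE rsubst_entry (bigD1 j) //=.
have -> : \sum_(l < n.+1 | l != j) horner_mx C (fentry f i l) l m = 0.
  apply: big1 => l hlj.
  have [lt_lj|lt_jl] := ltnP l j.
    apply: horner_zero_row.
      by move=> y; rewrite /C mxE; case: ifP => // /and3P[h1 _ _]; lia.
    by apply/eqP => e; move: hm; rewrite -e; lia.
  apply: rnull_row => //; apply: IH; last by lia.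
  by rewrite ltn_neqAle eq_sym hlj lt_jl.
by rewrite addr0.
Qed.

Lemma lstep (R : comNzRingType) n (f : {poly 'M[R]_n.+1}) (hf : forall k, upper_tri f`_k)
  (H : forall C : 'M[R]_n.+1, upper_tri C -> lsubst f C = 0) (i j : 'I_n.+1) :
  (forall l : 'I_n.+1, (l < i)%N -> forall j' : 'I_n.+1, (l <= j')%N ->
     nullR l (fentry f l j')) ->
  (i <= j)%N -> nullR i (fentry f i j).
Proof.
move=> IH hij D hD; apply/matrixP => a b; rewrite mxE.
have [lt_ba|le_ab] := ltnP b a; first by rewrite ut_horner.
have hi := ltn_ord i; have ha := ltn_ord a; have hb := ltn_ord b.
pose C := \matrix_(x < n.+1, y < n.+1)
  if [&& (i - b <= x)%N, (x <= y)%N & (y <= i)%N]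
  then D (inord (x - (i - b))) (inord (y - (i - b))) else 0.
have hC : upper_tri C.
  move=> x y lt_yx; rewrite /C mxE; case: ifP => // /and3P[_ hxy _]; lia.
have hw : forall x y, (x <= y <= b)%N ->
    D (inord (x + 0)) (inord (y + 0)) = C (inord (x + (i - b))) (inord (y + (i - b))).
  move=> x y hxy; rewrite /C mxE !inordK; try lia.
  rewrite ifT; last (apply/and3P; split; lia).
  by rewrite !addnK !addn0.
have hwin := horner_window (fentry f i j) hC hD _ _ hw (x := a) (y := b).
have hbi : (b <= i)%N by lia.
rewrite !addn0 (subnKC hbi) !inord_val in hwin.
rewrite hwin; try lia.
set r : 'I_n.+1 := inord (a + (i - b)).
have hr : (r : nat) = (a + (i - b))%N by rewrite /r inordK //; lia.
have := H C hC; move/matrixP => /(_ r j); rewrite mxE lsubst_entry (bigD1 i) //=.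
have -> : \sum_(l < n.+1 | l != i) horner_mx C (fentry f l j) r l = 0.
  apply: big1 => l hli.
  have [lt_li|lt_il] := ltnP l i.
    apply: lnull_col => //; apply: IH => //; lia.
  apply: horner_zero_col.
    by move=> x; rewrite /C mxE; case: ifP => // /and3P[_ _ h1]; move: hli; rewrite -val_eqE /=; lia.
  by apply/eqP => e; move: hr hli; rewrite e -val_eqE /=; lia.
by rewrite addr0.
Qed.

Unset Implicit Arguments.
Theorem corollary5p1 (R : comNzRingType) (n : nat) (f : {poly 'M[R]_n.+1})
    (hf : forall k : nat, upper_tri f`_k) :
  ((forall C : 'M[R]_n.+1, upper_tri C -> rsubst f C = 0) <->
     (forall i j : 'I_n.+1, (i <= j)%N -> nullR (n - j) (fentry f i j)))
  /\
  ((forall C : 'M[R]_n.+1, upper_tri C -> lsubst f C = 0) <->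
     (forall i j : 'I_n.+1, (i <= j)%N -> nullR i (fentry f i j))).
Proof.
split; split.
- move=> H.
  suff P : forall t (j : 'I_n.+1), (n - j < t)%N ->
      forall i : 'I_n.+1, (i <= j)%N -> nullR (n - j) (fentry f i j).
    by move=> i j hij; apply: (P n.+1) => //; lia.
  elim=> [|t IHt] j hjt i hij; first by [].
  apply: rstep => // l hjl i' hil; apply: IHt => //; have := ltn_ord l; lia.
- move=> hn C hC; apply/matrixP => i m; rewrite rsubst_entry mxE big1 // => l _.
  have [lt_li|le_il] := ltnP l i; first by rewrite fentry0 // rmorph0 mxE.
  exact: rnull_row hC (hn _ _ le_il).
- move=> H.
  suff P : forall t (i : 'I_n.+1), (i < t)%N ->
      forall j : 'I_n.+1, (i <= j)%N -> nullR i (fentry f i j).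
    by move=> i j; apply: (P n.+1).
  elim=> [|t IHt] i hit j hij; first by [].
  apply: lstep => // l hli j' hlj; apply: IHt => //; lia.
- move=> hn C hC; apply/matrixP => i m; rewrite lsubst_entry mxE big1 // => l _.
  have [lt_ml|le_lm] := ltnP m l; first by rewrite fentry0 // rmorph0 mxE.
  exact: lnull_col hC (hn _ _ le_lm).
Qed.
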